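(* For the $\mathrm{ECR}(\beta,\lambda)$ model with i.i.d. sample of size $n$, let $C(\beta)=\beta^3-7\beta^2+10\beta+72$. The Cox–Snell second-order bias terms of the maximum likelihood estimators are $$B_\beta=\frac1n\Bigg[\beta^3+13\beta^2+122\beta+380-\frac{699840}{19321(\beta+5)}+\frac{96000}{361(\beta+6)}+\frac{432(4085783\beta^2-8192586\beta-40352456)}{2641\,C(\beta)^2}-\frac{12(70740551\beta^2+3809213278\beta-35831044156)}{6974881\,C(\beta)}\Bigg],$$ $$B_\lambda=\frac\lambda n\Bigg[8\beta+86+\frac{49}{270\beta}-\frac{1679616}{96605(\beta+5)}+\frac{80000}{1083(\beta+6)}-\frac{8(84037561\beta^2+21509105\beta-393761162)}{7923\,C(\beta)^2}+\frac{356431397749\beta^2-158970444943\beta-4636191041858}{376643574\,C(\beta)}\Bigg].$$ (The bias-corrected estimators are $\tilde\beta=\hat\beta-B_\beta(\hat\beta,\hat\lambda)$, $\tilde\lambda=\hat\lambda-B_\lambda(\hat\beta,\hat\lambda)$.)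
   Context: The $\mathrm{ECR}(\beta,\lambda)$ distribution ($\beta,\lambda>0$) has density $f(x)=\beta\lambda\,\frac{x}{(\lambda^2+x^2)^{3/2}}\left(1-\frac{\lambda}{\sqrt{\lambda^2+x^2}}\right)^{\beta-1}$, $x>0$. For an i.i.d. sample of size $n$ with log-likelihood $\ell=\sum\log f(X_i)$ and $\theta=(\theta_1,\theta_2)=(\beta,\lambda)$, set $\kappa_{rs}=\mathbb E[\partial^2\ell/\partial\theta_r\partial\theta_s]$, $\kappa_{rst}=\mathbb E[\partial^3\ell/\partial\theta_r\partial\theta_s\partial\theta_t]$, $\kappa_{rs}^{(t)}=\partial\kappa_{rs}/\partial\theta_t$, and let $(\kappa^{rs})$ be the inverse of the $2\times2$ matrix $(\kappa_{rs})$. The Cox–Snell second-order bias term of the MLE of $\theta_i$ is $B_{\theta_i}=\sum_{r,s,t\in\{1,2\}}\kappa^{ir}\kappa^{st}\left(\kappa_{rs}^{(t)}-\tfrac12\kappa_{rst}\right)$ (so that $\mathbb E(\hat\theta_i)-\theta_i=B_{\theta_i}+O(n^{-2})$). *)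

(* Defs.v *)
From Stdlib Require Import Reals Lra.
Open Scope R_scope.

(* Density of ECR(beta, lambda) at x > 0. (lambda^2+x^2)^(3/2) = sqrt(lambda^2+x^2)^3. *)
Definition ecr_pdf (b l x : R) : R :=
  b * l * x / (sqrt (l ^ 2 + x ^ 2)) ^ 3
  * Rpower (1 - l / sqrt (l ^ 2 + x ^ 2)) (b - 1).

Definition ecr_logpdf (b l x : R) : R := ln (ecr_pdf b l x).

(* Partial derivative w.r.t. parameter theta_r, theta = (theta_0, theta_1) = (beta, lambda)
   (index 0 = beta, any other index = lambda; only indices 0,1 are ever summed over). *)
Definition par_deriv (r : nat) (g : R -> R -> R) (b l v : R) : Prop :=
  match r with
  | O => derivable_pt_lim (fun u => g u l) b v
  | _ => derivable_pt_lim (fun u => g b u) l v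
  end.

Definition improper_int_0_inf (g : R -> R) (I : R) : Prop :=
  (forall a b, 0 < a -> a <= b -> inhabited (Riemann_integrable g a b)) /\
  (forall eps, eps > 0 -> exists d M, 0 < d /\
     forall a b (pr : Riemann_integrable g a b),
       0 < a < d -> M < b -> Rabs (RiemannInt pr - I) < eps).

(* Inverse of the 2x2 matrix (k r s)_{r,s in {0,1}} (indices >= 1 read as 1). *)
Definition inv2 (k : nat -> nat -> R) (i j : nat) : R :=
  let det := k 0%nat 0%nat * k 1%nat 1%nat - k 0%nat 1%nat * k 1%nat 0%nat in
  match i, j with
  | O, O => k 1%nat 1%nat / det
  | O, _ => - k 0%nat 1%nat / det
  | _, O => - k 1%nat 0%nat / det
  | _, _ => k 0%nat 0%nat / det
  end.

(* Cox--Snell term B_{theta_i} = sum_{r,s,t in {0,1}} k^{ir} k^{st} (k_rs^(t) - k_rst / 2),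
   with k2 r s = kappa_rs, k3 r s t = kappa_rst, kd r s t = d kappa_rs / d theta_t. *)
Definition cox_snell_bias (k2 : nat -> nat -> R) (k3 kd : nat -> nat -> nat -> R)
    (i : nat) : R :=
  sum_f_R0 (fun r => sum_f_R0 (fun s => sum_f_R0 (fun t =>
    inv2 k2 i r * inv2 k2 s t * (kd r s t - / 2 * k3 r s t)) 1) 1) 1.

Definition ecr_C (b : R) : R := b ^ 3 - 7 * b ^ 2 + 10 * b + 72.

(* Main.v *)
Require Import Defs.
From Stdlib Require Import Reals Lra Psatz List.
From Coquelicot Require Import Coquelicot.
Open Scope R_scope.
Import ListNotations.


Definition SS (l x : R) := sqrt (l ^ 2 + x ^ 2).
Definition W (l x : R) := l / SS l x.
Definition U (l x : R) := 1 - W l x.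

Lemma S_pos l x : 0 < l -> 0 < SS l x.
Proof. intros; unfold SS; apply sqrt_lt_R0; nra. Qed.
Lemma S_sq l x : SS l x ^ 2 = l ^ 2 + x ^ 2.
Proof. unfold SS; rewrite pow2_sqrt; nra. Qed.
Lemma S_gt_l l x : 0 < l -> 0 < x -> l < SS l x.
Proof. intros. pose proof (S_pos l x H). pose proof (S_sq l x). nra. Qed.
Lemma S_ge_x l x : 0 < l -> 0 < x -> x <= SS l x.
Proof. intros. pose proof (S_pos l x H). pose proof (S_sq l x). nra. Qed.
Lemma W_pos l x : 0 < l -> 0 < W l x.
Proof. intros; unfold W; pose proof (S_pos l x H); apply Rdiv_lt_0_compat; lra. Qed.
Lemma W_lt1 l x : 0 < l -> 0 < x -> W l x < 1.
Proof. intros; unfold W; pose proof (S_gt_l l x H H0); pose proof (S_pos l x H).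
  apply Rmult_lt_reg_r with (SS l x); auto. field_simplify; lra. Qed.
Lemma U_pos l x : 0 < l -> 0 < x -> 0 < U l x.
Proof. intros; unfold U; pose proof (W_lt1 l x H H0); lra. Qed.

Lemma logpdf_eq b l x : 0 < b -> 0 < l -> 0 < x ->
  ecr_logpdf b l x = ln b + ln l + ln x - 3 * ln (SS l x) + (b - 1) * ln (U l x).
Proof.
  intros Hb Hl Hx. pose proof (S_pos l x Hl). pose proof (U_pos l x Hl Hx).
  unfold ecr_logpdf, ecr_pdf. fold (SS l x). 
  replace (1 - l / SS l x) with (U l x) by reflexivity.
  unfold Rdiv. rewrite ln_mult. 2: { apply Rmult_lt_0_compat. repeat apply Rmult_lt_0_compat; auto.
     apply Rinv_0_lt_compat; apply pow_lt; auto. }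
  2: { unfold Rpower; apply exp_pos. }
  rewrite ln_mult. 2: repeat apply Rmult_lt_0_compat; auto.
  2: apply Rinv_0_lt_compat; apply pow_lt; auto.
  rewrite ln_Rinv by (apply pow_lt; auto).
  rewrite ln_pow by auto.
  rewrite !ln_mult by (try apply Rmult_lt_0_compat; auto).
  unfold Rpower; rewrite ln_exp. simpl INR. ring.
Qed.


Lemma loc_pos (P : R -> Prop) b : 0 < b -> (forall u, 0 < u -> P u) -> locally b P.
Proof.
  intros Hb H. exists (mkposreal b Hb). intros y Hy. apply H.
  unfold ball in Hy; simpl in Hy; unfold AbsRing_ball, abs, minus, plus, opp in Hy; simpl in Hy.
  apply Rabs_lt_between in Hy. lra.
Qed.

Lemma deriv_eq (f g : R -> R) x l1 l2 : 0 < x -> (forall u, 0 < u -> f u = g u) ->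
  derivable_pt_lim f x l1 -> is_derive g x l2 -> l1 = l2.
Proof.
  intros Hx He H1 H2. apply is_derive_Reals in H1.
  apply (is_derive_ext_loc f g) in H1.
  2: { apply loc_pos; auto. }
  apply is_derive_unique in H1. apply is_derive_unique in H2. congruence.
Qed.

Lemma dW l x : 0 < l -> 0 < x ->
  is_derive (fun v => W v x) l (W l x * (1 - W l x ^ 2) / l).
Proof.
  intros Hl Hx. unfold W, SS. pose proof (S_pos l x Hl) as HS. pose proof (S_sq l x) as HS2.
  unfold SS in HS, HS2.
  auto_derive. { repeat split. nra. replace (l * (l * 1) + x * (x * 1)) with (l^2+x^2) by ring; lra. }
  replace (l * (l * 1) + x * (x * 1)) with (l^2+x^2) by ring.
  set (s := sqrt (l ^ 2 + x ^ 2)) in *. field. lra.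
Qed.


Lemma dlam (p pd : R -> R) k l x : 0 < l -> 0 < x -> (forall w, is_derive p w (pd w)) ->
  is_derive (fun v => p (W v x) / v ^ k) l
    ((pd (W l x) * (W l x - W l x ^ 3) - INR k * p (W l x)) / l ^ (Datatypes.S k)).
Proof.
  intros Hl Hx Hp.
  pose proof (dW l x Hl Hx) as HW.
  auto_derive.
  { repeat split. eexists; apply (Hp (W l x)). eexists; apply HW. apply pow_nonzero; lra. }
  replace (Derive (fun x0 : R => W x0 x) l) with (W l x * (1 - W l x ^ 2) / l)
    by (symmetry; apply is_derive_unique; exact HW).
  replace (Derive (fun x0 : R => p x0) (W l x)) with (pd (W l x))
    by (symmetry; apply is_derive_unique; exact (Hp (W l x))).
  destruct k as [|k]; simpl; field; try split; try apply pow_nonzero; lra.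
Qed.


Definition ph1 b w := 1 + (1-b)*w + (-2-b)*w^2.
Definition ph1d b w := (1-b) + 2*(-2-b)*w.
Definition ph2 b w := -1 + (-2-b)*w^2 + (-1+b)*w^3 + (4+2*b)*w^4.
Definition ph2d b w := 2*(-2-b)*w + 3*(-1+b)*w^2 + 4*(4+2*b)*w^3.
Definition ph3 b w := 2 + (-1+b)*w^3 + (12+6*b)*w^4 + (3-3*b)*w^5 + (-16-8*b)*w^6.
Definition ps1 w := - w - w^2.
Definition ps1d w := -1 - 2*w.
Definition ps2 w := - w^2 + w^3 + 2*w^4.
Definition ps2d w := -2*w + 3*w^2 + 8*w^3.

Lemma d_ph1 b w : is_derive (ph1 b) w (ph1d b w).
Proof. unfold ph1, ph1d. auto_derive; auto. ring. Qed.
Lemma d_ph2 b w : is_derive (ph2 b) w (ph2d b w).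
Proof. unfold ph2, ph2d. auto_derive; auto. ring. Qed.
Lemma d_ps1 w : is_derive ps1 w (ps1d w).
Proof. unfold ps1, ps1d. auto_derive; auto. ring. Qed.
Lemma d_ps2 w : is_derive ps2 w (ps2d w).
Proof. unfold ps2, ps2d. auto_derive; auto. ring. Qed.

Lemma dlnU l x : 0 < l -> 0 < x -> is_derive (fun v => ln (U v x)) l (ps1 (W l x) / l).
Proof.
  intros Hl Hx. pose proof (dW l x Hl Hx) as HW. pose proof (U_pos l x Hl Hx) as HU.
  unfold U in *.
  auto_derive. { repeat split; auto. eexists; apply HW. }
  replace (Derive (fun x0 : R => W x0 x) l) with (W l x * (1 - W l x ^ 2) / l)
    by (symmetry; apply is_derive_unique; exact HW).
  unfold ps1. field. lra.
Qed.

Lemma dlnS l x : 0 < l -> 0 < x -> is_derive (fun v => ln (SS v x)) l (W l x ^ 2 / l).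
Proof.
  intros Hl Hx. pose proof (S_pos l x Hl) as HS. pose proof (S_sq l x) as HS2.
  unfold W, SS in *.
  auto_derive. { replace (l * (l * 1) + x * (x * 1)) with (l^2+x^2) by ring. repeat split; try nra; lra. }
  replace (l * (l * 1) + x * (x * 1)) with (l^2+x^2) by ring.
  set (s := sqrt (l ^ 2 + x ^ 2)) in *. field_simplify; lra.
Qed.

Section D1.
Variable D1 : nat -> R -> R -> R -> R.
Hypothesis H1 : forall t b' l' x, 0 < b' -> 0 < l' -> 0 < x ->
     par_deriv t (fun u v => ecr_logpdf u v x) b' l' (D1 t b' l' x).

Lemma E1b b l x : 0 < b -> 0 < l -> 0 < x -> D1 0 b l x = 1 / b + ln (U l x).
Proof.
  intros Hb Hl Hx. pose proof (H1 0 b l x Hb Hl Hx) as H. simpl in H.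
  apply (deriv_eq (fun u => ecr_logpdf u l x) (fun u => ln u + ln l + ln x - 3 * ln (SS l x) + (u - 1) * ln (U l x)) _ _ _ Hb).
  - intros u Hu. apply logpdf_eq; auto.
  - exact H.
  - auto_derive; auto. field. lra.
Qed.

Lemma E1l b l x : 0 < b -> 0 < l -> 0 < x -> D1 1 b l x = ph1 b (W l x) / l.
Proof.
  intros Hb Hl Hx. pose proof (H1 1 b l x Hb Hl Hx) as H. simpl in H.
  apply (deriv_eq (fun v => ecr_logpdf b v x) (fun v => ln b + ln v + ln x - 3 * ln (SS v x) + (b - 1) * ln (U v x)) _ _ _ Hl).
  - intros u Hu. apply logpdf_eq; auto.
  - exact H.
  - assert (G : forall f1 f2 : R -> R, is_derive f1 l (W l x ^ 2 / l) -> is_derive f2 l (ps1 (W l x) / l) ->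
      is_derive (fun v => ln b + ln v + ln x - 3 * f1 v + (b - 1) * f2 v) l (ph1 b (W l x) / l)).
    { intros f1 f2 Hf1 Hf2. auto_derive. { repeat split; auto; eexists; eauto. }
      replace (Derive (fun y : R => f1 y) l) with (W l x ^2 / l) by (symmetry; apply is_derive_unique; exact Hf1).
      replace (Derive (fun y : R => f2 y) l) with (ps1 (W l x) / l) by (symmetry; apply is_derive_unique; exact Hf2).
      unfold ph1, ps1. field. lra. }
    apply (G (fun v => ln (SS v x)) (fun v => ln (U v x))).
    apply dlnS; auto. apply dlnU; auto.
Qed.
End D1.


Lemma is_derive_eq (f : R -> R) (x l1 l2 : R) : is_derive f x l1 -> l1 = l2 -> is_derive f x l2.
Proof. intros H ->; exact H. Qed.

Ltac ad := auto_derive; repeat (match goal with |- _ /\ _ => split end);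
  try lra; try (apply pow_nonzero; lra); try (apply Rgt_not_eq; nra); try (simpl; field; lra).

Lemma is_derive_cplus c (f : R -> R) x l : is_derive f x l -> is_derive (fun v => c + f v) x l.
Proof.
  intros H. auto_derive. eexists; eauto.
  replace (Derive (fun y : R => f y) x) with l by (symmetry; apply is_derive_unique; exact H). ring.
Qed.

Section D23.
Variable D1 : nat -> R -> R -> R -> R.
Variable D2 : nat -> nat -> R -> R -> R -> R.
Variable D3 : nat -> nat -> nat -> R -> R -> R -> R.
Hypothesis H1 : forall t b' l' x, 0 < b' -> 0 < l' -> 0 < x ->
     par_deriv t (fun u v => ecr_logpdf u v x) b' l' (D1 t b' l' x).
Hypothesis H2 : forall s t b' l' x, 0 < b' -> 0 < l' -> 0 < x ->
     par_deriv s (fun u v => D1 t u v x) b' l' (D2 s t b' l' x).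
Hypothesis H3 : forall r s t b' l' x, 0 < b' -> 0 < l' -> 0 < x ->
     par_deriv r (fun u v => D2 s t u v x) b' l' (D3 r s t b' l' x).

Lemma E2bb b l x : 0 < b -> 0 < l -> 0 < x -> D2 0 0 b l x = - 1 / b ^ 2.
Proof.
  intros Hb Hl Hx. pose proof (H2 0 0 b l x Hb Hl Hx) as H. simpl in H.
  apply (deriv_eq (fun u => D1 0 u l x) (fun u => 1 / u + ln (U l x)) _ _ _ Hb).
  - intros u Hu. apply E1b; auto.
  - exact H.
  - ad.
Qed.

Lemma E2bl b l x : 0 < b -> 0 < l -> 0 < x -> D2 0 1 b l x = ps1 (W l x) / l.
Proof.
  intros Hb Hl Hx. pose proof (H2 0 1 b l x Hb Hl Hx) as H. simpl in H.
  apply (deriv_eq (fun u => D1 1 u l x) (fun u => ph1 u (W l x) / l) _ _ _ Hb).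
  - intros u Hu. apply E1l; auto.
  - exact H.
  - unfold ph1, ps1. ad.
Qed.

Lemma E2lb b l x : 0 < b -> 0 < l -> 0 < x -> D2 1 0 b l x = ps1 (W l x) / l.
Proof.
  intros Hb Hl Hx. pose proof (H2 1 0 b l x Hb Hl Hx) as H. simpl in H.
  apply (deriv_eq (fun v => D1 0 b v x) (fun v => 1 / b + ln (U v x)) _ _ _ Hl).
  - intros u Hu. apply E1b; auto.
  - exact H.
  - apply is_derive_cplus. apply dlnU; auto.
Qed.

Lemma E2ll b l x : 0 < b -> 0 < l -> 0 < x -> D2 1 1 b l x = ph2 b (W l x) / l ^ 2.
Proof.
  intros Hb Hl Hx. pose proof (H2 1 1 b l x Hb Hl Hx) as H. simpl in H.
  apply (deriv_eq (fun v => D1 1 b v x) (fun v => ph1 b (W v x) / v ^ 1) _ _ _ Hl).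
  - intros u Hu. rewrite E1l; auto. field. lra.
  - exact H.
  - eapply is_derive_eq. apply dlam; auto. apply d_ph1.
    unfold ph1, ph1d, ph2. simpl. field. lra.
Qed.

Lemma E3bbb b l x : 0 < b -> 0 < l -> 0 < x -> D3 0 0 0 b l x = 2 / b ^ 3.
Proof.
  intros Hb Hl Hx. pose proof (H3 0 0 0 b l x Hb Hl Hx) as H. simpl in H.
  apply (deriv_eq (fun u => D2 0 0 u l x) (fun u => - 1 / u ^ 2) _ _ _ Hb).
  - intros u Hu. apply E2bb; auto.
  - exact H.
  - ad.
Qed.

Lemma E3bbl b l x : 0 < b -> 0 < l -> 0 < x -> D3 0 0 1 b l x = 0.
Proof.
  intros Hb Hl Hx. pose proof (H3 0 0 1 b l x Hb Hl Hx) as H. simpl in H.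
  apply (deriv_eq (fun u => D2 0 1 u l x) (fun u => ps1 (W l x) / l) _ _ _ Hb).
  - intros u Hu. apply E2bl; auto.
  - exact H.
  - ad.
Qed.

Lemma E3blb b l x : 0 < b -> 0 < l -> 0 < x -> D3 0 1 0 b l x = 0.
Proof.
  intros Hb Hl Hx. pose proof (H3 0 1 0 b l x Hb Hl Hx) as H. simpl in H.
  apply (deriv_eq (fun u => D2 1 0 u l x) (fun u => ps1 (W l x) / l) _ _ _ Hb).
  - intros u Hu. apply E2lb; auto.
  - exact H.
  - ad.
Qed.

Lemma E3bll b l x : 0 < b -> 0 < l -> 0 < x -> D3 0 1 1 b l x = ps2 (W l x) / l ^ 2.
Proof.
  intros Hb Hl Hx. pose proof (H3 0 1 1 b l x Hb Hl Hx) as H. simpl in H.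
  apply (deriv_eq (fun u => D2 1 1 u l x) (fun u => ph2 u (W l x) / l ^ 2) _ _ _ Hb).
  - intros u Hu. apply E2ll; auto.
  - exact H.
  - unfold ph2, ps2. ad.
Qed.

Lemma E3lbb b l x : 0 < b -> 0 < l -> 0 < x -> D3 1 0 0 b l x = 0.
Proof.
  intros Hb Hl Hx. pose proof (H3 1 0 0 b l x Hb Hl Hx) as H. simpl in H.
  apply (deriv_eq (fun v => D2 0 0 b v x) (fun v => - 1 / b ^ 2) _ _ _ Hl).
  - intros u Hu. apply E2bb; auto.
  - exact H.
  - ad.
Qed.

Lemma E3lbl b l x : 0 < b -> 0 < l -> 0 < x -> D3 1 0 1 b l x = ps2 (W l x) / l ^ 2.
Proof.
  intros Hb Hl Hx. pose proof (H3 1 0 1 b l x Hb Hl Hx) as H. simpl in H.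
  apply (deriv_eq (fun v => D2 0 1 b v x) (fun v => ps1 (W v x) / v ^ 1) _ _ _ Hl).
  - intros u Hu. rewrite E2bl; auto. field. lra.
  - exact H.
  - eapply is_derive_eq. apply dlam; auto. apply d_ps1.
    unfold ps1, ps1d, ps2. simpl. field. lra.
Qed.

Lemma E3llb b l x : 0 < b -> 0 < l -> 0 < x -> D3 1 1 0 b l x = ps2 (W l x) / l ^ 2.
Proof.
  intros Hb Hl Hx. pose proof (H3 1 1 0 b l x Hb Hl Hx) as H. simpl in H.
  apply (deriv_eq (fun v => D2 1 0 b v x) (fun v => ps1 (W v x) / v ^ 1) _ _ _ Hl).
  - intros u Hu. rewrite E2lb; auto. field. lra.
  - exact H.
  - eapply is_derive_eq. apply dlam; auto. apply d_ps1.
    unfold ps1, ps1d, ps2. simpl. field. lra.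
Qed.

Lemma E3lll b l x : 0 < b -> 0 < l -> 0 < x -> D3 1 1 1 b l x = ph3 b (W l x) / l ^ 3.
Proof.
  intros Hb Hl Hx. pose proof (H3 1 1 1 b l x Hb Hl Hx) as H. simpl in H.
  apply (deriv_eq (fun v => D2 1 1 b v x) (fun v => ph2 b (W v x) / v ^ 2) _ _ _ Hl).
  - intros u Hu. rewrite E2ll; auto.
  - exact H.
  - eapply is_derive_eq. apply dlam; auto. apply d_ph2.
    unfold ph2, ph2d, ph3. simpl. field. lra.
Qed.
End D23.


Lemma comp_R (f g : R -> R) (x df dg : R) : is_derive f (g x) df -> is_derive g x dg ->
  is_derive (fun t => f (g t)) x (dg * df).
Proof. intros Hf Hg. exact (is_derive_comp f g x df dg Hf Hg). Qed.

Lemma mult_R (f g : R -> R) (x df dg : R) : is_derive f x df -> is_derive g x dg ->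
  is_derive (fun t => f t * g t) x (df * g x + f x * dg).
Proof.
  intros Hf Hg. auto_derive. repeat split; try (eexists; eauto).
  replace (Derive (fun y : R => f y) x) with df by (symmetry; apply is_derive_unique; exact Hf).
  replace (Derive (fun y : R => g y) x) with dg by (symmetry; apply is_derive_unique; exact Hg).
  ring.
Qed.

Lemma dRpow y e : 0 < y -> is_derive (fun t => Rpower t e) y (e * Rpower y (e - 1)).
Proof. intros; apply is_derive_Reals, derivable_pt_lim_power; auto. Qed.

Lemma Rpower_1_base e : Rpower 1 e = 1.
Proof. unfold Rpower; rewrite ln_1, Rmult_0_r, exp_0; auto. Qed.

Lemma dU l x : 0 < l -> 0 < x -> is_derive (fun t => U l t) x (l * x / SS l x ^ 3).
Proof.
  intros Hl Hx. pose proof (S_pos l x Hl) as HS. pose proof (S_sq l x) as HS2.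
  unfold U, W, SS in *.
  auto_derive. { replace (l * (l * 1) + x * (x * 1)) with (l^2+x^2) by ring. repeat split; try nra; lra. }
  replace (l * (l * 1) + x * (x * 1)) with (l^2+x^2) by ring.
  set (s := sqrt (l ^ 2 + x ^ 2)) in *. field. lra.
Qed.

Lemma pdf_eq b l x : ecr_pdf b l x = b * (l * x / SS l x ^ 3) * Rpower (U l x) (b - 1).
Proof. unfold ecr_pdf, U, W, SS. unfold Rdiv. rewrite !Rmult_assoc. reflexivity. Qed.


Section Gen.
Variables (b l : R) (Q Q1 Q2 : R -> R).
Hypothesis Hb : 0 < b.
Hypothesis Hl : 0 < l.
Hypothesis HQ : forall y, is_derive Q y (Q1 y).
Hypothesis HQ1 : forall y, is_derive Q1 y (Q2 y).

Definition G x := Rpower (U l x) b * Q (U l x).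
Definition hx x := (Q (U l x) + U l x * Q1 (U l x) / b) * ecr_pdf b l x.

Lemma dRU e x : 0 < x -> is_derive (fun t => Rpower (U l t) e) x
   (l * x / SS l x ^ 3 * (e * Rpower (U l x) (e - 1))).
Proof.
  intros Hx. apply (comp_R (fun t => Rpower t e) (U l)).
  apply dRpow, U_pos; auto. apply dU; auto.
Qed.

Lemma dG x : 0 < x -> is_derive G x (hx x).
Proof.
  intros Hx. unfold G, hx.
  eapply is_derive_eq.
  - apply mult_R. apply dRU; auto. apply (comp_R Q (U l)). apply HQ. apply dU; auto.
  - rewrite pdf_eq. pose proof (U_pos l x Hl Hx) as HU.
    replace (Rpower (U l x) b) with (U l x * Rpower (U l x) (b - 1)).
    2: { rewrite <- (Rpower_1 (U l x)) at 1 by auto. rewrite <- Rpower_plus. f_equal; ring. }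
    field. pose proof (S_pos l x Hl); split; lra.
Qed.
End Gen.


Lemma cont_eps (f : R -> R) x0 d : is_derive f x0 d ->
  forall eps, 0 < eps -> exists alp, 0 < alp /\ forall y, Rabs (y - x0) < alp -> Rabs (f y - f x0) < eps.
Proof.
  intros Hd eps He.
  assert (Hc : continuity_pt f x0).
  { apply continuity_pt_filterlim. apply (ex_derive_continuous f). eexists; eauto. }
  destruct (Hc eps He) as [alp [Ha H]]. exists alp; split; auto.
  intros y Hy. destruct (Req_dec y x0) as [->|Hne].
  - rewrite Rminus_diag, Rabs_R0; auto.
  - apply (H y). split. split; [exact I | auto]. simpl. unfold R_dist. auto.
Qed.

Ltac fl := field; repeat split; try lra.

Lemma U_le l x : 0 < l -> 0 < x -> U l x <= x ^ 2 / l ^ 2.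
Proof.
  intros Hl Hx. pose proof (S_pos l x Hl). pose proof (S_sq l x). pose proof (S_gt_l l x Hl Hx).
  unfold U, W. set (s := SS l x) in *.
  apply Rmult_le_reg_r with (s * l ^ 2). apply Rmult_lt_0_compat; [lra | apply pow_lt; lra].
  replace ((1 - l / s) * (s * l ^ 2)) with ((s - l) * l ^ 2) by fl.
  replace (x ^ 2 / l ^ 2 * (s * l ^ 2)) with (x ^ 2 * s) by fl.
  assert (x ^ 2 = (s - l) * (s + l)) by nra. rewrite H2.
  assert (0 <= s - l) by lra. assert (l ^ 2 <= (s + l) * s) by nra. nra.
Qed.

Lemma W_le l x : 0 < l -> 0 < x -> W l x <= l / x.
Proof.
  intros Hl Hx. unfold W. pose proof (S_ge_x l x Hl Hx). pose proof (S_pos l x Hl).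
  apply Rmult_le_compat_l. lra. apply Rinv_le_contravar; lra.
Qed.

Section Lim.
Variables (b l : R) (Q Q1 : R -> R).
Hypothesis Hb : 0 < b.
Hypothesis Hl : 0 < l.
Hypothesis HQ : forall y, is_derive Q y (Q1 y).

Lemma Linf : forall eps, 0 < eps -> exists M, 0 < M /\ forall x, M < x -> Rabs (G b l Q x - Q 1) < eps.
Proof.
  intros eps He.
  assert (Hd : is_derive (fun y => Rpower y b * Q y) 1 (b * Rpower 1 (b - 1) * Q 1 + Rpower 1 b * Q1 1)).
  { apply (mult_R (fun y => Rpower y b) Q). apply dRpow; lra. apply HQ. }
  destruct (cont_eps _ _ _ Hd eps He) as [alp [Ha H]].
  exists (l / alp). split. apply Rdiv_lt_0_compat; auto.
  intros x Hx. assert (0 < x). { apply Rlt_trans with (l / alp); auto. apply Rdiv_lt_0_compat; auto. }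
  specialize (H (U l x)). rewrite Rpower_1_base, Rmult_1_l in H. apply H.
  unfold U. replace (1 - W l x - 1) with (- W l x) by ring. rewrite Rabs_Ropp.
  pose proof (W_pos l x Hl). rewrite Rabs_right by lra.
  apply Rle_lt_trans with (l / x). apply W_le; auto.
  apply Rmult_lt_reg_r with (x / alp). apply Rdiv_lt_0_compat; lra.
  replace (l / x * (x / alp)) with (l / alp) by fl.
  replace (alp * (x / alp)) with x by fl. auto.
Qed.

Lemma L0 : forall eps, 0 < eps -> exists d, 0 < d /\ forall x, 0 < x < d -> Rabs (G b l Q x) < eps.
Proof.
  intros eps He.
  destruct (cont_eps _ _ _ (HQ 0) 1 Rlt_0_1) as [d1 [Hd1 H1]].
  set (K := Rabs (Q 0) + 1).
  assert (HK : 0 < K) by (unfold K; pose proof (Rabs_pos (Q 0)); lra).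
  set (e2 := exp (ln (eps / K) / b)).
  set (eta := Rmin d1 e2).
  assert (Heta : 0 < eta) by (apply Rmin_pos; auto; apply exp_pos).
  exists (l * Rmin 1 eta). split. apply Rmult_lt_0_compat; auto. apply Rmin_pos; lra.
  intros x [Hx Hxd].
  pose proof (U_pos l x Hl Hx) as HU. pose proof (U_le l x Hl Hx) as HUle.
  assert (HUeta : U l x < eta).
  { assert (Hxl : x / l < Rmin 1 eta).
    { apply Rmult_lt_reg_r with l; auto. replace (x / l * l) with x by fl. lra. }
    pose proof (Rmin_l 1 eta). pose proof (Rmin_r 1 eta).
    assert (0 < x / l) by (apply Rdiv_lt_0_compat; auto).
    replace (x ^ 2 / l ^ 2) with ((x / l) * (x / l)) in HUle by fl. nra. }
  unfold G. rewrite Rabs_mult.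
  assert (HQb : Rabs (Q (U l x)) < K).
  { assert (Rabs (U l x - 0) < d1). { rewrite Rminus_0_r, Rabs_right by lra. pose proof (Rmin_l d1 e2). unfold eta in HUeta. lra. }
    specialize (H1 _ H). unfold K.
    pose proof (Rabs_triang_inv (Q (U l x)) (Q 0)). lra. }
  assert (HR : Rpower (U l x) b < eps / K).
  { unfold Rpower. rewrite <- (exp_ln (eps / K)) by (apply Rdiv_lt_0_compat; auto).
    apply exp_increasing.
    assert (ln (U l x) < ln (eps / K) / b).
    { rewrite <- (ln_exp (ln (eps / K) / b)). apply ln_increasing; auto.
      pose proof (Rmin_r d1 e2). unfold eta in HUeta. unfold e2 in *. lra. }
    apply Rmult_lt_reg_r with (/ b). apply Rinv_0_lt_compat; auto.
    replace (b * ln (U l x) * / b) with (ln (U l x)) by fl. auto. }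
  rewrite (Rabs_right (Rpower _ _)) by (left; unfold Rpower; apply exp_pos).
  replace eps with (eps / K * K) by fl.
  apply Rle_lt_trans with (eps / K * Rabs (Q (U l x))).
  apply Rmult_le_compat_r. apply Rabs_pos. lra.
  apply Rmult_lt_compat_l. apply Rdiv_lt_0_compat; auto. auto.
Qed.
End Lim.


Section Imp.
Variables (b l : R) (Q Q1 Q2 : R -> R).
Hypothesis Hb : 0 < b.
Hypothesis Hl : 0 < l.
Hypothesis HQ : forall y, is_derive Q y (Q1 y).
Hypothesis HQ1 : forall y, is_derive Q1 y (Q2 y).

Lemma hx_cont x : 0 < x -> continuous (hx b l Q Q1) x.
Proof.
  intros Hx. apply (@ex_derive_continuous R_AbsRing R_NormedModule).
  assert (Hab : forall (u s r : R -> R), ex_derive u x -> ex_derive s x -> ex_derive r x -> s x <> 0 ->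
    ex_derive (fun t => (Q (u t) + u t * Q1 (u t) / b) * (b * (l * t / s t ^ 3) * r t)) x).
  { intros u s r Hu Hs Hr Hs0. auto_derive. repeat split; auto; try (apply pow_nonzero; auto); try (eexists; eauto). repeat apply Rmult_integral_contrapositive_currified; auto; lra. }

  eapply ex_derive_ext.
  2: { apply (Hab (U l) (SS l) (fun t => Rpower (U l t) (b - 1))).
       - eexists; apply dU; auto.
       - unfold SS. auto_derive. replace (l * (l * 1) + x * (x * 1)) with (l ^ 2 + x ^ 2) by ring.
         repeat split; nra.
       - eexists; apply dRU; auto.
       - pose proof (S_pos l x Hl); lra. }
  intros t. unfold hx. rewrite pdf_eq. reflexivity.
Qed.

Lemma int_val a c : 0 < a -> a <= c -> is_RInt (hx b l Q Q1) a c (G b l Q c - G b l Q a).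
Proof.
  intros Ha Hac.
  apply (is_RInt_derive (G b l Q) (hx b l Q Q1) a c).
  - intros t Ht. rewrite Rmin_left in Ht by auto. apply dG; auto; lra.
  - intros t Ht. rewrite Rmin_left in Ht by auto. apply hx_cont; lra.
Qed.

Lemma improper_gen (g : R -> R) : (forall x, 0 < x -> g x = hx b l Q Q1 x) ->
  improper_int_0_inf g (Q 1).
Proof.
  intros Hg.
  assert (Hi : forall a c, 0 < a -> a <= c -> is_RInt g a c (G b l Q c - G b l Q a)).
  { intros a c Ha Hac. apply (is_RInt_ext (hx b l Q Q1)).
    - intros t Ht. rewrite Rmin_left in Ht by auto. symmetry; apply Hg; lra.
    - apply int_val; auto. }
  split.
  - intros a c Ha Hac. constructor. apply ex_RInt_Reals_0. eexists. apply Hi; auto.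
  - intros eps He.
    destruct (L0 b l Q Q1 Hb Hl HQ (eps / 2)) as [d [Hd H0]]. lra.
    destruct (Linf b l Q Q1 Hl HQ (eps / 2)) as [M [HM HI]]. lra.
    exists d, (Rmax M d). split; auto.
    intros a c pr [Ha Had] Hc.
    assert (Hac : a <= c). { pose proof (Rmax_r M d). lra. }
    rewrite <- RInt_Reals. rewrite (is_RInt_unique _ _ _ _ (Hi a c Ha Hac)).
    pose proof (Rmax_l M d).
    specialize (H0 a (conj Ha Had)). specialize (HI c ltac:(lra)).
    replace (G b l Q c - G b l Q a - Q 1) with ((G b l Q c - Q 1) - G b l Q a) by ring.
    eapply Rle_lt_trans. apply Rabs_triang. rewrite Rabs_Ropp. lra.
Qed.
End Imp.


Fixpoint pe (k : nat) (cs : list R) (y : R) : R :=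
  match cs with nil => 0 | c :: cs' => c * y ^ k + pe (Datatypes.S k) cs' y end.
Fixpoint qp (b : R) (k : nat) (cs : list R) (y : R) : R :=
  match cs with nil => 0 | c :: cs' => b * c / (b + INR k) * y ^ k + qp b (Datatypes.S k) cs' y end.
Fixpoint qpd (b : R) (k : nat) (cs : list R) (y : R) : R :=
  match cs with nil => 0
  | c :: cs' => b * c / (b + INR k) * (INR k * y ^ Init.Nat.pred k) + qpd b (Datatypes.S k) cs' y end.

Lemma plus_R (f g : R -> R) (x df dg : R) : is_derive f x df -> is_derive g x dg ->
  is_derive (fun t => f t + g t) x (df + dg).
Proof.
  intros Hf Hg. auto_derive. repeat split; try (eexists; eauto).
  replace (Derive (fun y : R => f y) x) with df by (symmetry; apply is_derive_unique; exact Hf).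
  replace (Derive (fun y : R => g y) x) with dg by (symmetry; apply is_derive_unique; exact Hg).
  ring.
Qed.

Lemma d_qp b cs : forall k y, is_derive (qp b k cs) y (qpd b k cs y).
Proof.
  induction cs as [|c cs IH]; intros k y; simpl.
  - apply is_derive_eq with 0. auto_derive; auto. reflexivity.
  - apply (plus_R (fun y => b * c / (b + INR k) * y ^ k) (qp b (Datatypes.S k) cs)).
    + auto_derive; auto. ring.
    + apply IH.
Qed.

Lemma ex_qpd b cs : forall k y, ex_derive (qpd b k cs) y.
Proof.
  induction cs as [|c cs IH]; intros k y; simpl.
  - auto_derive; auto.
  - apply (ex_derive_plus (fun y => b * c / (b + INR k) * (INR k * y ^ Init.Nat.pred k)) (qpd b (Datatypes.S k) cs)).
    + auto_derive; auto.
    + apply IH.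
Qed.

Lemma qp_id b cs : 0 < b -> forall k y, qp b k cs y + y * qpd b k cs y / b = pe k cs y.
Proof.
  intros Hb. induction cs as [|c cs IH]; intros k y; simpl.
  - field. lra.
  - rewrite <- (IH (Datatypes.S k) y).
    assert (0 <= INR k) by apply pos_INR.
    destruct k as [|k].
    + simpl. field. lra.
    + simpl pred. replace (y ^ Datatypes.S k) with (y * y ^ k) by reflexivity.
      field. lra.
Qed.

Lemma improper_poly b l cs (g : R -> R) : 0 < b -> 0 < l ->
  (forall x, 0 < x -> g x = pe 0 cs (U l x) * ecr_pdf b l x) ->
  improper_int_0_inf g (qp b 0 cs 1).
Proof.
  intros Hb Hl Hg.
  apply (improper_gen b l (qp b 0 cs) (qpd b 0 cs) (Derive (qpd b 0 cs))); auto.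
  - intros y. apply d_qp.
  - intros y. apply Derive_correct. apply ex_qpd.
  - intros x Hx. rewrite Hg by auto. unfold hx. rewrite qp_id; auto.
Qed.

Lemma improper_unique (g : R -> R) I1 I2 : improper_int_0_inf g I1 -> improper_int_0_inf g I2 -> I1 = I2.
Proof.
  intros [Hr H1] [_ H2].
  destruct (Req_dec (I1 - I2) 0) as [E|E]; [lra|].
  exfalso. set (e := Rabs (I1 - I2) / 2).
  assert (He : 0 < e) by (unfold e; pose proof (Rabs_pos_lt _ E); lra).
  destruct (H1 e He) as [d1 [M1 [Hd1 K1]]].
  destruct (H2 e He) as [d2 [M2 [Hd2 K2]]].
  set (a := Rmin d1 d2 / 2).
  assert (Ha : 0 < a) by (unfold a; pose proof (Rmin_pos _ _ Hd1 Hd2); lra).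
  set (c := Rmax (Rmax M1 M2) a + 1).
  assert (Hac : a <= c). { unfold c. pose proof (Rmax_r (Rmax M1 M2) a). lra. }
  destruct (Hr a c Ha Hac) as [pr].
  assert (Ha1 : 0 < a < d1). { unfold a. pose proof (Rmin_l d1 d2). pose proof (Rmin_pos _ _ Hd1 Hd2). lra. }
  assert (Ha2 : 0 < a < d2). { unfold a. pose proof (Rmin_r d1 d2). pose proof (Rmin_pos _ _ Hd1 Hd2). lra. }
  assert (Hc1 : M1 < c). { unfold c. pose proof (Rmax_l (Rmax M1 M2) a). pose proof (Rmax_l M1 M2). lra. }
  assert (Hc2 : M2 < c). { unfold c. pose proof (Rmax_l (Rmax M1 M2) a). pose proof (Rmax_r M1 M2). lra. }
  specialize (K1 a c pr Ha1 Hc1). specialize (K2 a c pr Ha2 Hc2).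
  assert (Rabs (I1 - I2) <= Rabs (RiemannInt pr - I2) + Rabs (RiemannInt pr - I1)).
  { replace (I1 - I2) with ((RiemannInt pr - I2) - (RiemannInt pr - I1)) by ring.
    eapply Rle_trans. apply Rabs_triang. rewrite Rabs_Ropp. lra. }
  unfold e in *. lra.
Qed.


Lemma W_U l x : W l x = 1 - U l x.
Proof. unfold U; ring. Qed.

Lemma K_eq (g : R -> R) I b l cs : improper_int_0_inf g I -> 0 < b -> 0 < l ->
  (forall x, 0 < x -> g x = pe 0 cs (U l x) * ecr_pdf b l x) -> I = qp b 0 cs 1.
Proof. intros H Hb Hl Hg. apply (improper_unique g I (qp b 0 cs 1)); auto. apply (improper_poly b l); auto. Qed.

Lemma sum_1 (f : nat -> R) : sum_f_R0 f 1 = f 0%nat + f 1%nat.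
Proof. reflexivity. Qed.

Theorem proposition11 :
  forall (n : nat) (b l : R), (1 <= n)%nat -> 0 < b -> 0 < l ->
  forall (D1 : nat -> R -> R -> R -> R)
         (D2 : nat -> nat -> R -> R -> R -> R)
         (D3 : nat -> nat -> nat -> R -> R -> R -> R)
         (K2 : nat -> nat -> R -> R -> R)
         (K3 Kd : nat -> nat -> nat -> R),
  (forall t b' l' x, 0 < b' -> 0 < l' -> 0 < x ->
     par_deriv t (fun u v => ecr_logpdf u v x) b' l' (D1 t b' l' x)) ->
  (forall s t b' l' x, 0 < b' -> 0 < l' -> 0 < x ->
     par_deriv s (fun u v => D1 t u v x) b' l' (D2 s t b' l' x)) ->
  (forall r s t b' l' x, 0 < b' -> 0 < l' -> 0 < x ->
     par_deriv r (fun u v => D2 s t u v x) b' l' (D3 r s t b' l' x)) ->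
  (forall r s b' l', 0 < b' -> 0 < l' ->
     improper_int_0_inf (fun x => INR n * D2 r s b' l' x * ecr_pdf b' l' x) (K2 r s b' l')) ->
  (forall r s t,
     improper_int_0_inf (fun x => INR n * D3 r s t b l x * ecr_pdf b l x) (K3 r s t)) ->
  (forall r s t, par_deriv t (fun u v => K2 r s u v) b l (Kd r s t)) ->
  cox_snell_bias (fun r s => K2 r s b l) K3 Kd 0%nat =
    / INR n * ( b ^ 3 + 13 * b ^ 2 + 122 * b + 380
      - 699840 / (19321 * (b + 5))
      + 96000 / (361 * (b + 6))
      + 432 * (4085783 * b ^ 2 - 8192586 * b - 40352456) / (2641 * ecr_C b ^ 2)
      - 12 * (70740551 * b ^ 2 + 3809213278 * b - 35831044156) / (6974881 * ecr_C b))
  /\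
  cox_snell_bias (fun r s => K2 r s b l) K3 Kd 1%nat =
    l / INR n * ( 8 * b + 86 + 49 / (270 * b)
      - 1679616 / (96605 * (b + 5))
      + 80000 / (1083 * (b + 6))
      - 8 * (84037561 * b ^ 2 + 21509105 * b - 393761162) / (7923 * ecr_C b ^ 2)
      + (356431397749 * b ^ 2 - 158970444943 * b - 4636191041858) / (376643574 * ecr_C b)).
Proof.
  intros n b l Hn Hb Hl D1 D2 D3 K2 K3 Kd HD1 HD2 HD3 HK2 HK3 HKd.
  assert (HN : 0 < INR n) by (apply lt_0_INR; lia).
  set (N := INR n) in *.
  assert (E00 : forall u v, 0 < u -> 0 < v -> K2 0%nat 0%nat u v = - N / u ^ 2).
  { intros u v Hu Hv.
    rewrite (K_eq _ _ u v ( [N * (-1 / u ^ 2)]) (HK2 0%nat 0%nat u v Hu Hv) Hu Hv).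
    - simpl. field. lra.
    - intros x Hx. rewrite (E2bb D1 D2 HD1 HD2 u v x) by auto. simpl. ring. }
  assert (E01 : forall u v, 0 < u -> 0 < v -> K2 0%nat 1%nat u v = - N * (u + 4) / (v * (u + 1) * (u + 2))).
  { intros u v Hu Hv.
    rewrite (K_eq _ _ u v ( [N / v * (-2); N / v * 3; N / v * (-1)]) (HK2 0%nat 1%nat u v Hu Hv) Hu Hv).
    - simpl. field. repeat split; lra.
    - intros x Hx. rewrite (E2bl D1 D2 HD1 HD2 u v x) by auto. unfold ps1. rewrite W_U. simpl. field. lra. }
  assert (E10 : forall u v, 0 < u -> 0 < v -> K2 1%nat 0%nat u v = - N * (u + 4) / (v * (u + 1) * (u + 2))).
  { intros u v Hu Hv.
    rewrite (K_eq _ _ u v ( [N / v * (-2); N / v * 3; N / v * (-1)]) (HK2 1%nat 0%nat u v Hu Hv) Hu Hv).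
    - simpl. field. repeat split; lra.
    - intros x Hx. rewrite (E2lb D1 D2 HD1 HD2 u v x) by auto. unfold ps1. rewrite W_U. simpl. field. lra. }
  assert (E11 : forall u v, 0 < u -> 0 < v -> K2 1%nat 1%nat u v =
      - N * u * (u ^ 2 + 11 * u + 36) / (v ^ 2 * (u + 2) * (u + 3) * (u + 4))).
  { intros u v Hu Hv.
    rewrite (K_eq _ _ u v (
       [N / v ^ 2 * (2 * u); N / v ^ 2 * (-9 - 9 * u); N / v ^ 2 * (19 + 14 * u);
        N / v ^ 2 * (-15 - 9 * u); N / v ^ 2 * (4 + 2 * u)]) (HK2 1%nat 1%nat u v Hu Hv) Hu Hv).
    - simpl. field. repeat split; lra.
    - intros x Hx. rewrite (E2ll D1 D2 HD1 HD2 u v x) by auto. unfold ph2. rewrite W_U. simpl. field. lra. }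
  assert (F3 : forall r s t cs, (forall x, 0 < x -> N * D3 r s t b l x = pe 0 cs (U l x)) ->
      K3 r s t = qp b 0 cs 1).
  { intros r s t cs Hc. apply (K_eq _ _ b l cs (HK3 r s t) Hb Hl).
    intros x Hx. rewrite Hc; auto. }
  assert (T000 : K3 0%nat 0%nat 0%nat = 2 * N / b ^ 3).
  { rewrite (F3 _ _ _ [N * (2 / b ^ 3)]). simpl. field. lra.
    intros x Hx. rewrite (E3bbb D1 D2 D3 HD1 HD2 HD3 b l x) by auto. simpl. ring. }
  assert (T001 : K3 0%nat 0%nat 1%nat = 0).
  { rewrite (F3 _ _ _ []). reflexivity.
    intros x Hx. rewrite (E3bbl D1 D2 D3 HD1 HD2 HD3 b l x) by auto. simpl. ring. }
  assert (T010 : K3 0%nat 1%nat 0%nat = 0).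
  { rewrite (F3 _ _ _ []). reflexivity.
    intros x Hx. rewrite (E3blb D1 D2 D3 HD1 HD2 HD3 b l x) by auto. simpl. ring. }
  assert (T100 : K3 1%nat 0%nat 0%nat = 0).
  { rewrite (F3 _ _ _ []). reflexivity.
    intros x Hx. rewrite (E3lbb D1 D2 D3 HD1 HD2 HD3 b l x) by auto. simpl. ring. }
  assert (T2 : forall r s t, (forall x, 0 < x -> D3 r s t b l x = ps2 (W l x) / l ^ 2) ->
      K3 r s t = - 2 * N * (b ^ 2 + 4 * b - 24) / (l ^ 2 * (b + 1) * (b + 2) * (b + 3) * (b + 4))).
  { intros r s t Hd. rewrite (F3 _ _ _ [N / l ^ 2 * 2; N / l ^ 2 * (-9); N / l ^ 2 * 14; N / l ^ 2 * (-9); N / l ^ 2 * 2]).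
    simpl. field. repeat split; lra.
    intros x Hx. rewrite Hd by auto. unfold ps2. rewrite W_U. simpl. field. lra. }
  assert (T011 := T2 0%nat 1%nat 1%nat (fun x Hx => E3bll D1 D2 D3 HD1 HD2 HD3 b l x Hb Hl Hx)).
  assert (T101 := T2 1%nat 0%nat 1%nat (fun x Hx => E3lbl D1 D2 D3 HD1 HD2 HD3 b l x Hb Hl Hx)).
  assert (T110 := T2 1%nat 1%nat 0%nat (fun x Hx => E3llb D1 D2 D3 HD1 HD2 HD3 b l x Hb Hl Hx)).
  assert (T111 : K3 1%nat 1%nat 1%nat = N * b * (2 * b ^ 5 + 42 * b ^ 4 + 356 * b ^ 3 + 1698 * b ^ 2 + 5114 * b + 3732)
      / (l ^ 3 * (b + 1) * (b + 2) * (b + 3) * (b + 4) * (b + 5) * (b + 6))).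
  { rewrite (F3 _ _ _ [N / l ^ 3 * (-4 * b); N / l ^ 3 * (36 + 36 * b); N / l ^ 3 * (-141 - 111 * b);
       N / l ^ 3 * (243 + 165 * b); N / l ^ 3 * (-213 - 129 * b); N / l ^ 3 * (93 + 51 * b); N / l ^ 3 * (-16 - 8 * b)]).
    simpl. field. repeat split; lra.
    intros x Hx. rewrite (E3lll D1 D2 D3 HD1 HD2 HD3 b l x) by auto. unfold ph3. rewrite W_U. simpl. field. lra. }
  assert (DB : forall r s (f : R -> R) v, (forall u, 0 < u -> K2 r s u l = f u) -> is_derive f b v -> Kd r s 0%nat = v).
  { intros r s f v Hf Hd. pose proof (HKd r s 0%nat) as H. simpl in H.
    apply (deriv_eq (fun u => K2 r s u l) f _ _ _ Hb); auto. }
  assert (DL : forall r s (f : R -> R) v, (forall u, 0 < u -> K2 r s b u = f u) -> is_derive f l v -> Kd r s 1%nat = v).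
  { intros r s f v Hf Hd. pose proof (HKd r s 1%nat) as H. simpl in H.
    apply (deriv_eq (fun u => K2 r s b u) f _ _ _ Hl); auto. }
  evar (d000 : R). assert (Q000 : Kd 0%nat 0%nat 0%nat = d000).
  { apply (DB 0%nat 0%nat (fun u => - N / u ^ 2)). intros; apply E00; auto.
    auto_derive; try (match goal with |- _ = ?v => unfold v; reflexivity end); repeat split; try (apply Rgt_not_eq; nra). }
  evar (d001 : R). assert (Q001 : Kd 0%nat 0%nat 1%nat = d001).
  { apply (DL 0%nat 0%nat (fun u => - N / b ^ 2)). intros; apply E00; auto.
    auto_derive; try (match goal with |- _ = ?v => unfold v; reflexivity end); repeat split; try (apply Rgt_not_eq; nra). }
  evar (d010 : R). assert (Q010 : Kd 0%nat 1%nat 0%nat = d010).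
  { apply (DB 0%nat 1%nat (fun u => - N * (u + 4) / (l * (u + 1) * (u + 2)))). intros; apply E01; auto.
    auto_derive; try (match goal with |- _ = ?v => unfold v; reflexivity end); repeat split; try (apply Rgt_not_eq; nra). }
  evar (d011 : R). assert (Q011 : Kd 0%nat 1%nat 1%nat = d011).
  { apply (DL 0%nat 1%nat (fun u => - N * (b + 4) / (u * (b + 1) * (b + 2)))). intros; apply E01; auto.
    auto_derive; try (match goal with |- _ = ?v => unfold v; reflexivity end); repeat split; try (apply Rgt_not_eq; nra). }
  evar (d100 : R). assert (Q100 : Kd 1%nat 0%nat 0%nat = d100).
  { apply (DB 1%nat 0%nat (fun u => - N * (u + 4) / (l * (u + 1) * (u + 2)))). intros; apply E10; auto.
    auto_derive; try (match goal with |- _ = ?v => unfold v; reflexivity end); repeat split; try (apply Rgt_not_eq; nra). }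
  evar (d101 : R). assert (Q101 : Kd 1%nat 0%nat 1%nat = d101).
  { apply (DL 1%nat 0%nat (fun u => - N * (b + 4) / (u * (b + 1) * (b + 2)))). intros; apply E10; auto.
    auto_derive; try (match goal with |- _ = ?v => unfold v; reflexivity end); repeat split; try (apply Rgt_not_eq; nra). }
  evar (d110 : R). assert (Q110 : Kd 1%nat 1%nat 0%nat = d110).
  { apply (DB 1%nat 1%nat (fun u => - N * u * (u ^ 2 + 11 * u + 36) / (l ^ 2 * (u + 2) * (u + 3) * (u + 4)))).
    intros; apply E11; auto.
    auto_derive; try (match goal with |- _ = ?v => unfold v; reflexivity end); repeat split; try (apply Rgt_not_eq; nra). }
  evar (d111 : R). assert (Q111 : Kd 1%nat 1%nat 1%nat = d111).
  { apply (DL 1%nat 1%nat (fun u => - N * b * (b ^ 2 + 11 * b + 36) / (u ^ 2 * (b + 2) * (b + 3) * (b + 4)))).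
    intros; apply E11; auto.
    auto_derive; try (match goal with |- _ = ?v => unfold v; reflexivity end); repeat split; try (apply Rgt_not_eq; nra). }
  assert (HC : 0 < ecr_C b).
  { unfold ecr_C. assert (0 <= (b - 4) ^ 2 * (b + 1)) by (apply Rmult_le_pos; [apply pow2_ge_0 | lra]). nra. }
  assert (Hdet : K2 0%nat 0%nat b l * K2 1%nat 1%nat b l - K2 0%nat 1%nat b l * K2 1%nat 0%nat b l =
     N ^ 2 * ecr_C b / (l ^ 2 * b * (b + 1) ^ 2 * (b + 2) ^ 2 * (b + 3) * (b + 4))).
  { rewrite E00, E01, E10, E11 by auto. unfold ecr_C. field. repeat split; lra. }
  assert (I00 : inv2 (fun r s => K2 r s b l) 0%nat 0%nat =
     - b ^ 2 * (b + 1) ^ 2 * (b + 2) * (b ^ 2 + 11 * b + 36) / (N * ecr_C b)).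
  { unfold inv2. rewrite Hdet. rewrite E11 by auto. field. repeat split; lra. }
  assert (I01 : inv2 (fun r s => K2 r s b l) 0%nat 1%nat =
     l * b * (b + 1) * (b + 2) * (b + 3) * (b + 4) ^ 2 / (N * ecr_C b)).
  { unfold inv2. rewrite Hdet. rewrite E01 by auto. field. repeat split; lra. }
  assert (I10 : inv2 (fun r s => K2 r s b l) 1%nat 0%nat =
     l * b * (b + 1) * (b + 2) * (b + 3) * (b + 4) ^ 2 / (N * ecr_C b)).
  { unfold inv2. rewrite Hdet. rewrite E10 by auto. field. repeat split; lra. }
  assert (I11 : inv2 (fun r s => K2 r s b l) 1%nat 1%nat =
     - l ^ 2 * (b + 1) ^ 2 * (b + 2) ^ 2 * (b + 3) * (b + 4) / (b * N * ecr_C b)).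
  { unfold inv2. rewrite Hdet. rewrite E00 by auto. field. repeat split; lra. }
  unfold cox_snell_bias. rewrite !sum_1. cbv beta.
  rewrite I00, I01, I10, I11, T000, T001, T010, T011, T100, T101, T110, T111,
    Q000, Q001, Q010, Q011, Q100, Q101, Q110, Q111.
  subst d000 d001 d010 d011 d100 d101 d110 d111.
  assert (HC' : ecr_C b <> 0) by lra.
  clearbody N. unfold ecr_C in *.
  split.
  - field. repeat split; try lra; auto.
  - field. repeat split; try lra; auto.
Qed.
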